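(* For $r\ge1$, let $\mathbf{v}_r\in\mathrm{GF}(q^m)^r$ have rank $r\le m$, and let $\mathcal{L}_r=\langle\mathbf{v}_r\rangle^\perp$. Then the number $A_{r,r}$ of vectors in $\mathcal{L}_r$ of rank $r$ depends only on $r$ (not on the choice of $\mathbf{v}_r$) and satisfies $A_{r,r}=\alpha(m,r-1)-q^{r-1}A_{r-1,r-1}$, where $A_{0,0}=1$. Furthermore, the rank weight enumerator of $\mathcal{L}_r$ is $$W^{\mathrm{R}}_{\mathcal{L}_r}(x,y)=q^{-m}\Big\{\big[x+(q^m-1)y\big]^{[r]}+(q^m-1)(x-y)^{[r]}\Big\}.$$
   Context: $q$ is a prime power. For $\mathbf{x}\in\mathrm{GF}(q^m)^r$, $\mathrm{rk}(\mathbf{x})$ is the dimension over $\mathrm{GF}(q)$ of the $\mathrm{GF}(q)$-span of its coordinates in $\mathrm{GF}(q^m)$. $\langle\mathbf{v}\rangle=\{a\mathbf{v}:a\in\mathrm{GF}(q^m)\}$, $S^\perp=\{\mathbf{u}:\sum_iu_is_i=0\ \forall\mathbf{s}\in S\}$. $\alpha(m,0)=1$, $\alpha(m,u)=\prod_{i=0}^{u-1}(q^m-q^i)$. The rank weight enumerator of $\mathcal{C}\subseteq\mathrm{GF}(q^m)^r$ is $\sum_{\mathbf{c}\in\mathcal{C}}y^{\mathrm{rk}(\mathbf{c})}x^{r-\mathrm{rk}(\mathbf{c})}$. $q$-product: for homogeneous polynomials $a(x,y;m)=\sum_{i=0}^{d}a_i(m)y^ix^{d-i}$ and $b(x,y;m)=\sum_{j=0}^{e}b_j(m)y^jx^{e-j}$,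 with coefficients real functions of $m$ (zero outside the given ranges), $a*b=\sum_{u=0}^{d+e}c_u(m)y^ux^{d+e-u}$ with $c_u(m)=\sum_{i=0}^uq^{ie}a_i(m)b_{u-i}(m-i)$. $q$-powers: $a^{[0]}=1$, $a^{[l]}=a^{[l-1]}*a$. Here $x+(q^m-1)y$ has coefficients $1,q^m-1$ and $x-y$ has coefficients $1,-1$. *)

(* Defs.v *)
From HB Require Import structures.
From mathcomp Require Import all_boot all_order all_algebra all_field.
Set Implicit Arguments. Unset Strict Implicit. Unset Printing Implicit Defensive.
Import Order.TTheory GRing.Theory Num.Theory.
Local Open Scope ring_scope.

(* Convention: GF(q) is a finite field F (q = #|F|), GF(q^m) is a finite
   field extension L of F with \dim {:L} = m. *)

Section RankMetric.
Variables (F : finFieldType) (L : fieldExtType F).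
Local Notation LT := (finvect_type L).

Definition rk (r : nat) (x : 'rV[LT]_r) : nat :=
  \dim <<[seq x ord0 i | i <- enum 'I_r]>>%VS.

Definition lspan (r : nat) (v : 'rV[LT]_r) : {set 'rV[LT]_r} :=
  [set a *: v | a : LT].

Definition perp (r : nat) (S : {set 'rV[LT]_r}) : {set 'rV[LT]_r} :=
  [set u : 'rV[LT]_r | [forall s in S, \sum_(i < r) u 0 i * s 0 i == 0]].

(* number of codewords of rank u in C: the coefficient of y^u x^(r-u) in the
   rank weight enumerator of C *)
Definition rwe_coef (r : nat) (C : {set 'rV[LT]_r}) (u : nat) : nat :=
  #|[set c in C | rk c == u]|.

End RankMetric.

Definition alpha (q m u : nat) : int :=
  \prod_(i < u) ((q ^ m)%:Z - (q ^ i)%:Z).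

(* Homogeneous polynomials sum_{i=0}^d a_i(m) y^i x^(d-i) whose coefficients
   are rational-valued functions of m (m ranging over int, since the q-product
   evaluates coefficients at shifted arguments m - i). *)
Record hpoly := HPoly { hdeg : nat; hcoef : nat -> int -> rat }.

Definition hc (a : hpoly) (i : nat) (m : int) : rat :=
  if (i <= hdeg a)%N then hcoef a i m else 0.

Definition qprod (q : nat) (a b : hpoly) : hpoly :=
  HPoly (hdeg a + hdeg b)
    (fun u m => \sum_(i < u.+1)
        (q%:Q) ^+ (i * hdeg b) * hc a i m * hc b (u - i) (m - i%:Z)).

Definition hone : hpoly := HPoly 0 (fun _ _ => 1).

Fixpoint qpow (q : nat) (a : hpoly) (l : nat) : hpoly :=
  match l with
  | 0 => hone
  | l'.+1 => qprod q (qpow q a l') a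
  end.

(* x + (q^m - 1) y  and  x - y *)
Definition hX_plus (q : nat) : hpoly :=
  HPoly 1 (fun i m => if i == 0%N then 1 else (q%:Q) ^ m - 1).
Definition hX_minus : hpoly :=
  HPoly 1 (fun i _ => if i == 0%N then 1 else -1).

(* Main.v *)
Require Import Defs.
From HB Require Import structures.
From mathcomp Require Import all_boot all_order all_algebra all_field.
From mathcomp Require Import ring zify.
Import Order.TTheory GRing.Theory Num.Theory.
Local Open Scope ring_scope.
Set Implicit Arguments. Unset Strict Implicit. Unset Printing Implicit Defensive.

Section Cons.
Variable T : Type.
Definition rc (r : nat) (x : T) (w : 'rV[T]_r) : 'rV[T]_r.+1 :=
  \row_(i < r.+1) (if unlift ord0 i is Some j then w ord0 j else x).
Definition tl (r : nat) (u : 'rV[T]_r.+1) : 'rV[T]_r := \row_(j < r) u ord0 (lift ord0 j).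
Lemma rc0 r x (w : 'rV[T]_r) : rc x w ord0 ord0 = x.
Proof. by rewrite mxE unlift_none. Qed.
Lemma rcS r x (w : 'rV[T]_r) j : rc x w ord0 (lift ord0 j) = w ord0 j.
Proof. by rewrite mxE liftK. Qed.
Lemma tl_rc r x (w : 'rV[T]_r) : tl (rc x w) = w.
Proof. by apply/rowP => j; rewrite mxE rcS. Qed.
Lemma rc_eta r (u : 'rV[T]_r.+1) : rc (u ord0 ord0) (tl u) = u.
Proof.
apply/rowP => i; rewrite !mxE; case: unliftP => [j ->|->]; last by rewrite ord1.
by rewrite mxE ord1.
Qed.
End Cons.

Lemma card_rc (T : finType) r (P : pred 'rV[T]_r.+1) :
  (\sum_(u : 'rV[T]_r.+1) (P u : nat) = \sum_(w : 'rV[T]_r) \sum_(x : T) (P (rc x w) : nat))%N.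
Proof.
rewrite (reindex (fun p : T * 'rV[T]_r => rc p.1 p.2)) /=; last first.
  exists (fun u : 'rV[T]_r.+1 => (u ord0 ord0, tl u)) => [[x w] _|u _] /=.
    by rewrite rc0 tl_rc.
  by rewrite rc_eta.
rewrite -(pair_big xpredT xpredT (fun x w => (P (rc x w) : nat))) /=.
by rewrite exchange_big.
Qed.

Section Rank.
Variables (F : finFieldType) (L : fieldExtType F).
Local Notation LT := (finvect_type L).

Definition sp r (w : 'rV[LT]_r) : {vspace LT} := <<[seq w ord0 i | i <- enum 'I_r]>>%VS.

Lemma rkE r (w : 'rV[LT]_r) : rk w = \dim (sp w).
Proof. by []. Qed.

Lemma rk_le r (w : 'rV[LT]_r) : (rk w <= r)%N.
Proof. by rewrite rkE /sp (leq_trans (dim_span _)) // size_map size_enum_ord. Qed.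

Lemma mem_sp r (w : 'rV[LT]_r) i : w ord0 i \in sp w.
Proof. by apply: memv_span; apply: map_f; rewrite mem_enum. Qed.

Lemma sp_sub r (w : 'rV[LT]_r) (U : {vspace LT}) :
  (forall i, w ord0 i \in U) -> (sp w <= U)%VS.
Proof. by move=> H; apply/span_subvP => y /mapP [i _ ->]. Qed.

Lemma sp_rc r x (w : 'rV[LT]_r) : sp (rc x w) = (<[x]> + sp w)%VS.
Proof.
rewrite /sp enum_ordSl /= span_cons rc0 -map_comp; congr (_ + <<_>>)%VS.
by apply: eq_map => j /=; rewrite rcS.
Qed.

Lemma rk_rc r x (w : 'rV[LT]_r) : rk (rc x w) = (rk w + (x \notin sp w))%N.
Proof.
rewrite !rkE sp_rc; case: (boolP (x \in sp w)) => xin /=.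
  by rewrite addn0; congr (\dim _); apply/addv_idPr; rewrite -memvE.
rewrite addnC dimv_disjoint_sum; last first.
  apply/eqP; rewrite -subv0; apply/subvP => y; rewrite memv_cap memv0.
  case/andP => /vlineP [k ->] yin; apply/negPn/negP => nz.
  have k0 : k != 0 by apply: contraNneq nz => ->; rewrite scale0r.
  by move: xin; rewrite -(scale1r x) -(mulVf k0) -scalerA (memvZ _ yin).
rewrite dim_vline; congr (_ + _)%N; case: eqP xin => // ->.
by rewrite mem0v.
Qed.

End Rank.

Section Fiber.
Variables (F : finFieldType) (L : fieldExtType F).
Local Notation LT := (finvect_type L).

Definition lc r (a : 'rV[F]_r) (w : 'rV[LT]_r) : LT := \sum_i a ord0 i *: w ord0 i.

Lemma lc_rc r k (a : 'rV[F]_r) x (w : 'rV[LT]_r) : lc (rc k a) (rc x w) = k *: x + lc a w.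
Proof. by rewrite /lc big_ord_recl !rc0; congr (_ + _); apply: eq_bigr => i _; rewrite !rcS. Qed.

Lemma sum_const_F (n : nat) : (\sum_(k : F) n = #|F| * n)%N.
Proof. by rewrite sum_nat_const cardT -cardE. Qed.

Lemma fiber r (w : 'rV[LT]_r) c :
  (\sum_(a : 'rV[F]_r) (lc a w == c : nat) = (c \in sp w) * #|F| ^ (r - rk w))%N.
Proof.
elim: r w c => [|r IH] w c.
  have lc0 a : lc a w = 0 by rewrite /lc big_ord0.
  have sp0 : sp w = 0%VS.
    by rewrite /sp (size0nil (size_enum_ord 0)) span_nil.
  rewrite rkE sp0 dimv0 memv0 expn0 muln1.
  under eq_bigr do rewrite lc0.
  by rewrite sum_nat_const cardT -cardE card_mx muln0 expn0 mul1n eq_sym.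
rewrite -(rc_eta w); set x := w ord0 ord0; set w' := tl w.
rewrite card_rc exchange_big /=.
under eq_bigr => k _ do under eq_bigr => a _ do rewrite lc_rc addrC (can2_eq (addrK _) (subrK _)).
under eq_bigr => k _ do rewrite IH.
rewrite rk_rc sp_rc.
have rkw := rk_le w'.
case: (boolP (x \in sp w')) => xin.
  have -> : (<[x]> + sp w' = sp w')%VS by apply/addv_idPr; rewrite -memvE.
  under eq_bigr => k _ do rewrite rpredDr ?rpredN ?rpredZ //.
  by rewrite sum_const_F addn0 subSn // expnS mulnCA.
rewrite addn1 subSS.
rewrite -big_distrl /=; congr (_ * _)%N.
case: (boolP (c \in (<[x]> + sp w')%VS)) => cin /=; last first.
  apply/eqP; rewrite sum_nat_eq0; apply/forallP => k; apply/implyP => _.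
  rewrite eqb0; apply: contra cin => H.
  by rewrite -[c](addrNK (k *: x)) addrC memv_add ?memvZ ?memv_line.
case/memv_addP: cin => u /vlineP [k0 ->] [y yin ->].
rewrite (bigD1 k0) //= addrAC subrr add0r yin -[1%N]addn0; congr (_ + _)%N.
apply/eqP; rewrite sum_nat_eq0; apply/forallP => k; apply/implyP => kk0.
rewrite eqb0; apply: contra xin => H.
have : (k0 - k) *: x \in sp w'.
  have -> : (k0 - k) *: x = (k0 *: x + y - k *: x) - y by rewrite scalerBl addrAC addrK.
  exact: memvB.
have nz : k0 - k != 0 by rewrite subr_eq0 eq_sym.
move=> H2; rewrite -[x](scale1r) -(mulVf nz) -scalerA.
by apply: memvZ.
Qed.
End Fiber.

Section Count.
Variables (F : finFieldType) (L : fieldExtType F) (m : nat).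
Hypothesis hm : \dim {: L}%VS = m.
Local Notation LT := (finvect_type L).
Local Notation q := (#|F|).

Lemma cardL : #|LT| = (q ^ m)%N.
Proof.
rewrite -(card_vspacef (Vector.class LT)) card_vspace; congr (_ ^ _)%N.
exact: hm.
Qed.

Lemma sum_sp r (w : 'rV[LT]_r) : (\sum_(x : LT) (x \in sp w : nat) = q ^ rk w)%N.
Proof.
rewrite rkE -card_vspace -sum1_card [RHS]big_mkcond /=.
by apply: eq_bigr => x _; case: (x \in sp w).
Qed.

Lemma ptw (a s : nat) (c : bool) :
  ((a + ~~ c == s)%N%:R : rat) =
     (c : nat)%:R * (a == s : nat)%:R + (1 - (c : nat)%:R) * (a + 1 == s)%N%:R.
Proof. by case: c => /=; rewrite ?addn0 ?addn1 ?subrr ?subr0 ?mul1r ?mul0r ?addr0 ?add0r. Qed.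

Definition Nc r s : nat := \sum_(w : 'rV[LT]_r) (rk w == s : nat).

Lemma Nstep r s :
  (Nc r.+1 s)%:R = (q%:R ^+ s * (Nc r s)%:R +
     (if s is s'.+1 then (q%:R ^+ m - q%:R ^+ s') * (Nc r s')%:R else 0) : rat).
Proof.
rewrite /Nc (card_rc (fun u => rk u == s)) natr_sum.
under eq_bigr => w _.
  rewrite natr_sum.
  under eq_bigr => x _ do rewrite rk_rc ptw.
  rewrite big_split /= -!mulr_suml -natr_sum sum_sp sumrB -natr_sum sum_sp.
  rewrite (_ : \sum_(i : LT) (1 : rat) = (q ^ m)%N%:R); last first.
    by rewrite sumr_const cardL.

  over.
rewrite big_split /=; congr (_ + _).
  rewrite natr_sum mulr_sumr; apply: eq_bigr => w _.
  by case: eqP => [->|]; rewrite ?mulr1 ?mulr0 // natrX.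
case: s => [|s].

  by rewrite big1 // => w _; rewrite addn1 mulr0.

rewrite natr_sum mulr_sumr; apply: eq_bigr => w _.
rewrite addn1 eqSS; case: eqP => [->|]; rewrite ?mulr1 ?mulr0 //.
by rewrite !natrX.
Qed.

End Count.

Section BCount.
Variables (F : finFieldType) (L : fieldExtType F) (m : nat).
Hypothesis hm : \dim {: L}%VS = m.
Local Notation LT := (finvect_type L).
Local Notation q := (#|F|).

Definition phi r (v u : 'rV[LT]_r) : LT := \sum_i u ord0 i * v ord0 i.
Definition Bc r (v : 'rV[LT]_r) s : nat :=
  \sum_(u : 'rV[LT]_r) (((phi v u == 0%R :> LT) && (rk u == s)%N) : nat).

Lemma phi_rc r y (v : 'rV[LT]_r) x w : phi (rc y v) (rc x w) = x * y + phi v w.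
Proof. by rewrite /phi big_ord_recl !rc0; congr (_ + _); apply: eq_bigr => i _; rewrite !rcS. Qed.

Lemma sum_eq1 (T : finType) (a : T) (P : pred T) :
  (\sum_(x : T) ((x == a) && P x : nat) = P a)%N.
Proof.
rewrite (bigD1 a) //= eqxx big1 ?addn0 // => x /negbTE ->; by [].
Qed.

Definition vp r (v : 'rV[LT]_r) (y : LT) (a : 'rV[F]_r) : 'rV[LT]_r :=
  \row_i (v ord0 i + a ord0 i *: y).

Lemma phi_vp r (v : 'rV[LT]_r) y a w : phi (vp v y a) w = phi v w + lc a w * y.
Proof.
rewrite /phi /lc mulr_suml -big_split /=; apply: eq_bigr => i _.
by rewrite mxE mulrDr -scalerAl scalerAr.
Qed.

Lemma rk_vp r (v : 'rV[LT]_r.+1) a : rk v = r.+1 -> rk (vp (tl v) (v ord0 ord0) a) = r.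
Proof.
move=> hv; apply/eqP; rewrite eqn_leq rk_le /=.
set y := v ord0 ord0; set w := vp (tl v) y a.
have : (sp v <= <[y]> + sp w)%VS.
  rewrite -(rc_eta v) sp_rc subv_add addvSl /=; apply: sp_sub => i.
  have -> : tl v ord0 i = - (a ord0 i *: y) + w ord0 i by rewrite /w /vp !mxE addrC addrK.
  by apply: memv_add; rewrite ?memvN ?memvZ ?memv_line ?mem_sp.
move/dimvS; rewrite -rkE hv => H.
have := leq_trans H (dimv_add_leqif _ _).1.
by rewrite dim_vline -rkE; case: (y != 0) => /=; rewrite ?add1n ?add0n // => /ltnW.
Qed.


Lemma q_gt0 : (0 < q)%N.
Proof. by apply/card_gt0P; exists 0. Qed.

Lemma q_neq0 : (q%:R : rat) != 0.
Proof. by rewrite pnatr_eq0 -lt0n q_gt0. Qed.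

Lemma Bstep r (v : 'rV[LT]_r.+1) (X : nat -> rat) :
  rk v = r.+1 ->
  (forall v' : 'rV[LT]_r, rk v' = r -> forall s, ((Bc v' s)%:R : rat) = X s) ->
  forall s, ((Bc v s)%:R : rat) = q%:R ^+ s * X s +
     (if s is s'.+1 then (Nc L r s')%:R - q%:R ^+ s' * X s' else 0).
Proof.
move=> hv IH s.
pose y := v ord0 ord0; pose v' := tl v.
have Ev : v = rc y v' by rewrite rc_eta.
have y0 : y != 0.
  apply/eqP => y0; move: hv; rewrite Ev rk_rc y0 mem0v addn0 => hv'.
  by have := rk_le v'; rewrite hv' ltnn.
pose f w := - phi v' w / y.
have cond w x : (x * y + phi v' w == 0) = (x == f w).
  by rewrite addr_eq0 (can2_eq (mulfK y0) (divfK y0)).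
have HB : Bc v s = (\sum_(w : 'rV[LT]_r) ((rk w + (f w \notin sp w)) == s))%N.
  rewrite /Bc {1}Ev card_rc; apply: eq_bigr => w _.
  under eq_bigr => x _ do rewrite phi_rc rk_rc cond.
  exact: (sum_eq1 (f w) (fun x => rk w + (x \notin sp w) == s)%N).
have HE t : ((\sum_(w : 'rV[LT]_r) ((f w \in sp w) && (rk w == t)%N : nat))%:R : rat)
            = q%:R ^+ t * X t.
  have D : (\sum_(a : 'rV[F]_r) Bc (vp v' y a) t =
            \sum_(w : 'rV[LT]_r) (rk w == t) * ((f w \in sp w) * q ^ (r - rk w)))%N.
    under [RHS]eq_bigr => w _ do rewrite -fiber.
    rewrite /Bc exchange_big; apply: eq_bigr => w _; rewrite big_distrr /=.
    apply: eq_bigr => a _; rewrite phi_vp addrC cond.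
    by case: (rk w == t); rewrite ?andbT ?andbF ?mul1n ?mul0n.
  have D2 : (\sum_(w : 'rV[LT]_r) (rk w == t) * ((f w \in sp w) * q ^ (r - rk w)) =
             (\sum_(w : 'rV[LT]_r) ((f w \in sp w) && (rk w == t)%N : nat)) * q ^ (r - t))%N.
    rewrite big_distrl /=; apply: eq_bigr => w _.
    by case: eqP => [->|]; rewrite ?andbT ?andbF ?mul1n ?mul0n.
  rewrite D2 in D; move/(congr1 (fun n => n%:R : rat)): D.
  rewrite natr_sum natrM natrX.
  under eq_bigr => a _ do rewrite IH ?rk_vp //.
  rewrite sumr_const card_mx mul1n -[X t *+ _]mulr_natl natrX.


  set E := (\sum_w _)%N.
  case: (leqP t r) => [tr|rt].
    move=> H; apply: (@mulIf _ (q%:R ^+ (r - t))); first by rewrite expf_neq0 // q_neq0.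
    have Hr : (q%:R ^+ r : rat) = q%:R ^+ t * q%:R ^+ (r - t) by rewrite -exprD subnKC.
    by rewrite -H Hr; ring.
  have -> : E = 0%N.
    by rewrite /E big1 // => w _; rewrite (ltn_eqF (leq_ltn_trans (rk_le w) rt)) andbF.
  rewrite mul0r => /eqP; rewrite mulf_eq0 expf_eq0 (negbTE q_neq0) andbF /= => /eqP ->.
  by rewrite mulr0.
rewrite HB natr_sum.
under eq_bigr => w _ do rewrite ptw -natrM mulnb mulrBl mul1r.
rewrite big_split /= -natr_sum HE; congr (_ + _).
case: s {HB} => [|s].
  by rewrite big1 // => w _; rewrite addn1 /= mulr0 subrr.
rewrite sumrB; under eq_bigr => w _ do rewrite addn1 eqSS.
under [X in _ - X]eq_bigr => w _ do rewrite addn1 eqSS -natrM mulnb.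
by rewrite -!natr_sum HE.
Qed.
End BCount.

Section HAlg.
Variable q : nat.
Hypothesis q0 : (0 < q)%N.

Lemma qQ0 : (q%:Q) != 0.
Proof. by rewrite pnatr_eq0 -lt0n. Qed.

Lemma hdeg_qpow a r : hdeg a = 1%N -> hdeg (qpow q a r) = r.
Proof. by move=> ha; elim: r => //= r ->; rewrite ha addn1. Qed.

Lemma hc_out a u mm : (hdeg a < u)%N -> hc a u mm = 0.
Proof. by rewrite /hc => /ltn_geF ->. Qed.

Lemma hc_step X a u mm : hdeg a = 1%N ->
  hc (qprod q X a) u mm = (q%:Q) ^+ u * hc X u mm * hc a 0 (mm - u%:Z) +
     (if u is u'.+1 then (q%:Q) ^+ u' * hc X u' mm * hc a 1 (mm - u'%:Z) else 0).
Proof.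
move=> ha; rewrite {1}/hc /qprod /= ha.
case: leqP => hu; last first.
  rewrite (@hc_out X u) ?mulr0 ?mul0r ?add0r; last first.
    by apply: leq_ltn_trans hu; rewrite addn1.
  case: u hu => // u hu; rewrite (@hc_out X u) ?mulr0 ?mul0r //.
  by rewrite -ltnS -addn1.
rewrite big_ord_recr /= subnn muln1 addrC; congr (_ + _).
case: u hu => [|u] hu; first by rewrite big_ord0.
rewrite big_ord_recr /= muln1 subSn // subnn.
rewrite big1 ?add0r // => i _.
rewrite (@hc_out a) ?mulr0 // ha.
by have := ltn_ord i; lia.
Qed.

Definition Pp r := qpow q (hX_plus q) r.
Definition Qm r := qpow q hX_minus r.

Lemma Pstep r u mm :
  hc (Pp r.+1) u mm = (q%:Q) ^+ u * hc (Pp r) u mm +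
    (if u is u'.+1 then ((q%:Q) ^ mm - (q%:Q) ^+ u') * hc (Pp r) u' mm else 0).
Proof.
rewrite /Pp /= hc_step //= /hc /= mulr1; congr (_ + _).
case: u => // u.
have e : (q%:Q) ^+ u * (q%:Q) ^ (mm - u%:Z) = (q%:Q) ^ mm.
  by rewrite -[X in X * _]/((q%:Q) ^ (u%:Z)) -expfzDr ?qQ0 // addrC subrK.
set H := (if _ then _ else _); rewrite -e; ring.
Qed.

Lemma Qstep r u mm :
  hc (Qm r.+1) u mm = (q%:Q) ^+ u * hc (Qm r) u mm -
    (if u is u'.+1 then (q%:Q) ^+ u' * hc (Qm r) u' mm else 0).
Proof.
rewrite /Qm /= hc_step //= /hc /= mulr1; congr (_ + _).
case: u => [|u]; first by rewrite oppr0.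
by rewrite mulrN1.
Qed.

Lemma hdegP r : hdeg (Pp r) = r. Proof. exact: hdeg_qpow. Qed.
Lemma hdegQ r : hdeg (Qm r) = r. Proof. exact: hdeg_qpow. Qed.

Variable m : nat.

Definition W r u : rat :=
  (q%:Q) ^ (- (m%:Z)) *
     (hc (qpow q (hX_plus q) r) u m%:Z
      + ((q%:Q) ^ (m%:Z) - 1) * hc (qpow q hX_minus r) u m%:Z).

Lemma Wstep r u : W r.+1 u = (q%:Q) ^+ u * W r u +
   (if u is u'.+1 then hc (Pp r) u' m%:Z - (q%:Q) ^+ u' * W r u' else 0).
Proof.
rewrite /W -!/(Pp _) -!/(Qm _) Pstep Qstep -invr_expz.
have z0 : (q%:Q) ^ (m%:Z) != 0 by rewrite expfz_neq0 ?qQ0.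
by case: u => [|u]; field.
Qed.

Lemma W0 u : W 0 u = (u == 0%N)%:R.
Proof.
rewrite /W /= /hc /=; case: u => [|u] /=; last by ring.
rewrite -invr_expz mulr1 addrC subrK mulVf //.
by rewrite expfz_neq0 ?qQ0.
Qed.

Lemma W_out r u : (r < u)%N -> W r u = 0.
Proof.
move=> ru; rewrite /W -!/(Pp _) -!/(Qm _) !hc_out ?hdegP ?hdegQ //.
by rewrite mulr0 addr0 mulr0.
Qed.

Lemma P_top r : hc (Pp r) r m%:Z = (alpha q m r)%:~R.
Proof.
elim: r => [|r IH]; first by rewrite /alpha big_ord0 /hc /=.
rewrite Pstep hc_out ?hdegP // mulr0 add0r IH /alpha big_ord_recr /=.
rewrite rmorphM /= mulrC; congr (_ * _).
by rewrite rmorphB /= -!pmulrn !natrX.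

Qed.

End HAlg.

Section Main.
Variables (F : finFieldType) (L : fieldExtType F) (m : nat).
Hypothesis hm : \dim {: L}%VS = m.
Local Notation LT := (finvect_type L).
Local Notation q := (#|F|).

Lemma r0_one (P : pred 'rV[LT]_0) : (\sum_(w : 'rV[LT]_0) (P w : nat) = P 0%R)%N.
Proof.
rewrite (bigD1 0) //= big1 ?addn0 // => w /negP []; apply/eqP/rowP => [[]] //.
Qed.

Lemma rk0 (w : 'rV[LT]_0) : rk w = 0%N.
Proof. by apply/eqP; rewrite -leqn0 rk_le. Qed.

Lemma Nclaim r s : ((Nc L r s)%:R : rat) = hc (Pp q r) s m%:Z.
Proof.
elim: r s => [|r IH] s.
  by rewrite /Nc r0_one rk0 /hc /=; case: s.
rewrite (Nstep hm) (Pstep (q_gt0 F)).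
case: s => [|s]; rewrite ?IH //.

Qed.

Lemma Bclaim r (v : 'rV[LT]_r) : rk v = r -> forall s, ((Bc v s)%:R : rat) = W q m r s.
Proof.
elim: r v => [|r IH] v hv s.
  rewrite (W0 (q_gt0 F)) /Bc (bigD1 0%R) //= big1 ?addn0; last first.
    by move=> w /negP []; apply/eqP/rowP => [[]].
  by rewrite rk0 /phi big_ord0 eqxx /=; case: s.
rewrite (Bstep hv IH) (Wstep (q_gt0 F)); case: s => // s.
by rewrite Nclaim.
Qed.

Lemma rweE r (v : 'rV[LT]_r) u : rwe_coef (perp (lspan v)) u = Bc v u.
Proof.
rewrite /rwe_coef /Bc -sum1_card [LHS]big_mkcond /=; apply: eq_bigr => c _.
rewrite !inE; congr (nat_of_bool (_ && _)).
apply/forallP/eqP => [H | H s].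
  have := H v; rewrite (_ : v \in lspan v) /=; first by move/eqP.
  by apply/imsetP; exists 1 => //; rewrite scale1r.
apply/implyP => /imsetP [a _ ->].
rewrite (eq_bigr (fun i => a * (c ord0 i * v ord0 i))); last first.
  by move=> i _; rewrite mxE mulrCA.
by rewrite -mulr_sumr -/(phi v c) H mulr0.
Qed.

End Main.

Fixpoint Afix (q m r : nat) : int :=
  match r with
  | 0%N => 1
  | r'.+1 => alpha q m r' - (q ^ r')%:Z * Afix q m r'
  end.

Lemma WA (q m : nat) : (0 < q)%N -> forall r, W q m r r = (Afix q m r)%:~R.
Proof.
move=> q0; elim=> [|r IH]; first by rewrite W0.
rewrite Wstep // W_out // mulr0 add0r P_top // IH /=.
by rewrite rmorphB rmorphM /= -[((q ^ r)%N)%:~R]pmulrn natrX.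

Qed.

Unset Implicit Arguments.

Theorem lemma7 (F : finFieldType) (L : fieldExtType F) (m : nat) :
  \dim {: L}%VS = m ->
  let q := #|F| in
  (* A_{r,r} depends only on r and satisfies the recursion *)
  (exists A : nat -> int,
     A 0%N = 1 /\
     (forall r : nat, (1 <= r <= m)%N ->
        A r = alpha q m r.-1 - (q ^ r.-1)%:Z * A r.-1) /\
     (forall (r : nat) (v : 'rV[finvect_type L]_r),
        (1 <= r <= m)%N -> rk v = r ->
        (rwe_coef (perp (lspan v)) r)%:Z = A r))
  /\
  (* rank weight enumerator of L_r *)
  (forall (r : nat) (v : 'rV[finvect_type L]_r),
     (1 <= r <= m)%N -> rk v = r ->
     forall u : nat,
       (rwe_coef (perp (lspan v)) u)%:R =
       (q%:Q) ^ (- (m%:Z)) *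
         (hc (qpow q (hX_plus q) r) u m%:Z
          + ((q%:Q) ^ (m%:Z) - 1) * hc (qpow q hX_minus r) u m%:Z)).
Proof.
move=> hm q.
have q0 : (0 < q)%N := q_gt0 F.
split.
  exists (Afix q m); split; first by [].
  split; first by case.
  move=> r v _ hv; apply: (@intr_inj rat).
  by rewrite rweE -pmulrn (Bclaim hm hv) WA.
move=> r v _ hv u.
by rewrite rweE (Bclaim hm hv).
Qed.
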